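(* Let $A\in\mathbb{C}$, let $\sqrt{A}$ denote either square root of $A$, and let $|q|<1$. Define $F(A;q):=\sum_{n\geq0}\frac{q^{n^2}(A;q^2)_n}{(q^2;q^2)_n}$. Then $$F(A;q)=\frac12 (-q;q^2)_{\infty}\left[(-\sqrt{A};-q)_{\infty}+(\sqrt{A};-q)_{\infty}\right].$$
   Context: The $q$-Pochhammer symbol: $(a;q)_0=1$, $(a;q)_n=\prod_{j=0}^{n-1}(1-aq^j)$ for $n\ge1$, and $(a;q)_\infty=\prod_{j\ge0}(1-aq^j)$. *)

(* Defs.v *)
From Stdlib Require Import Reals.
From Coquelicot Require Import Coquelicot.

Open Scope C_scope.

Fixpoint qpoch (a q : C) (n : nat) : C :=
  match n with
  | O => 1
  | S m => qpoch a q m * (1 - a * q ^ m)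
  end.

Definition is_qpoch_inf (a q l : C) : Prop :=
  filterlim (fun n => qpoch a q n) eventually (locally l).

Definition F_term (A q : C) (n : nat) : C :=
  q ^ (n * n) * qpoch A (q ^ 2) n / qpoch (q ^ 2) (q ^ 2) n.

(* Main.v *)
Require Import Defs.
From Stdlib Require Import Reals Lra Lia Arith.
From Coquelicot Require Import Coquelicot.
Open Scope C_scope.

Definition Clim (u : nat -> C) (l : C) : Prop :=
  forall eps : R, (0 < eps)%R -> exists N, forall n, (N <= n)%nat -> (Cmod (u n - l) < eps)%R.

Lemma Clim_filterlim (u : nat -> C) (l : C) :
  Clim u l -> filterlim u eventually (locally l).
Proof.
  intros H. apply (filterlim_locally_ball_norm (K:=C_AbsRing) (U:=C_NormedModule)).
  intros eps. destruct (H eps (cond_pos eps)) as [N HN].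
  exists N. intros n Hn. unfold ball_norm. Set Printing All. idtac. Unset Printing All. change (Cmod (u n - l) < eps)%R. apply HN; lia.
Qed.

Lemma filterlim_Clim (u : nat -> C) (l : C) :
  filterlim u eventually (locally l) -> Clim u l.
Proof.
  intros H eps Heps.
  pose proof (proj1 (filterlim_locally_ball_norm (K:=C_AbsRing) (U:=C_NormedModule) u l) H (mkposreal eps Heps)) as [N HN].
  exists N. intros n Hn. specialize (HN n Hn). change (Cmod (u n - l) < eps)%R in HN. exact HN.
Qed.

Fixpoint fsum (f : nat -> C) (n : nat) : C :=
  match n with O => 0 | S m => fsum f m + f m end.
Fixpoint fsumR (f : nat -> R) (n : nat) : R :=
  match n with O => 0%R | S m => (fsumR f m + f m)%R end.

Lemma sum_n_fsum (a : nat -> C) n : sum_n a n = fsum a (S n).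
Proof.
  induction n.
  - rewrite sum_O. simpl. ring.
  - rewrite sum_Sn, IHn. reflexivity.
Qed.

Lemma sum_n_fsumR (a : nat -> R) n : sum_n a n = fsumR a (S n).
Proof.
  induction n.
  - rewrite sum_O. simpl. ring.
  - rewrite sum_Sn, IHn. reflexivity.
Qed.

Lemma Clim_shift1 (u : nat -> C) l : Clim u l <-> Clim (fun n => u (S n)) l.
Proof.
  split; intros H eps Heps; destruct (H eps Heps) as [N HN]; exists (S N); intros n Hn.
  - apply HN; lia.
  - destruct n as [|n]; [lia|]. apply HN; lia.
Qed.

Lemma is_series_Clim (a : nat -> C) l : is_series a l <-> Clim (fsum a) l.
Proof.
  split; intro H.
  - apply Clim_shift1. apply filterlim_Clim in H.
    intros eps Heps. destruct (H eps Heps) as [N HN]. exists N. intros n Hn.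
    rewrite <- sum_n_fsum. apply HN; auto.
  - apply Clim_filterlim. apply Clim_shift1 in H.
    intros eps Heps. destruct (H eps Heps) as [N HN]. exists N. intros n Hn.
    rewrite sum_n_fsum. apply HN; auto.
Qed.

Definition Rlim (u : nat -> R) (l : R) : Prop :=
  forall eps : R, (0 < eps)%R -> exists N, forall n, (N <= n)%nat -> (Rabs (u n - l) < eps)%R.

Lemma is_series_Rlim (a : nat -> R) l : is_series a l -> Rlim (fsumR a) l.
Proof.
  intros H eps Heps.
  pose proof (proj1 (filterlim_locally_ball_norm (K:=R_AbsRing) (U:=R_NormedModule) (sum_n a) l) H (mkposreal eps Heps)) as [N HN].
  exists (S N). intros n Hn. destruct n as [|n]; [lia|].
  specialize (HN n ltac:(lia)). unfold ball_norm in HN.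
  rewrite sum_n_fsumR in HN. exact HN.
Qed.

Lemma Clim_unique u l1 l2 : Clim u l1 -> Clim u l2 -> l1 = l2.
Proof.
  intros H1 H2. apply Clim_filterlim in H1. apply Clim_filterlim in H2.
  exact (filterlim_locally_unique (K:=C_AbsRing) (V:=C_NormedModule) u l1 l2 H1 H2).
Qed.

Lemma Cmod_sub_sym x y : Cmod (x - y) = Cmod (y - x).
Proof. replace (x - y) with (- (y - x)) by ring. apply Cmod_opp. Qed.

Lemma Cmod_tri3 x y z : (Cmod (x - z) <= Cmod (x - y) + Cmod (y - z))%R.
Proof. replace (x - z) with ((x - y) + (y - z)) by ring. apply Cmod_triangle. Qed.

Lemma Clim_ext u v l : (forall n, u n = v n) -> Clim u l -> Clim v l.
Proof. intros E H eps Heps. destruct (H eps Heps) as [N HN]. exists N. intros n Hn. rewrite <- E. auto. Qed.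

Lemma Clim_const c : Clim (fun _ => c) c.
Proof. intros eps Heps. exists O. intros. replace (c - c) with (RtoC 0) by ring. rewrite Cmod_0. lra. Qed.

Lemma Clim_plus u v l m : Clim u l -> Clim v m -> Clim (fun n => u n + v n) (l + m).
Proof.
  intros Hu Hv eps Heps.
  destruct (Hu (eps/2)%R ltac:(lra)) as [N1 H1]. destruct (Hv (eps/2)%R ltac:(lra)) as [N2 H2].
  exists (N1 + N2)%nat. intros n Hn.
  replace (u n + v n - (l + m)) with ((u n - l) + (v n - m)) by ring.
  eapply Rle_lt_trans; [apply Cmod_triangle|].
  specialize (H1 n ltac:(lia)). specialize (H2 n ltac:(lia)). lra.
Qed.

Lemma Clim_bounded u l : Clim u l -> exists B, (0 < B)%R /\ forall n, (Cmod (u n) <= B)%R.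
Proof.
  intros H. destruct (H 1%R Rlt_0_1) as [N HN].
  assert (exists B0, (0 <= B0)%R /\ forall n, (n < N)%nat -> (Cmod (u n) <= B0)%R) as [B0 [HB0 HB]].
  { clear HN. induction N.
    - exists 0%R. split; [lra|]. intros; lia.
    - destruct IHN as [B0 [HB0 HB]]. exists (Rmax B0 (Cmod (u N))). split.
      + eapply Rle_trans; [exact HB0|apply Rmax_l].
      + intros n Hn. destruct (Nat.eq_dec n N).
        * subst. apply Rmax_r.
        * eapply Rle_trans; [apply HB; lia|apply Rmax_l]. }
  exists (B0 + Cmod l + 1)%R. split. { pose proof (Cmod_ge_0 l). lra. }
  intros n. destruct (le_lt_dec N n).
  - specialize (HN n l0). pose proof (Cmod_tri3 (u n) l 0). replace (u n - 0) with (u n) in H0 by ring. replace (l - 0) with l in H0 by ring.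
    lra.
  - specialize (HB n l0). pose proof (Cmod_ge_0 l). lra.
Qed.

Lemma Clim_mult u v l m : Clim u l -> Clim v m -> Clim (fun n => u n * v n) (l * m).
Proof.
  intros Hu Hv. destruct (Clim_bounded u l Hu) as [B [HB0 HB]].
  intros eps Heps.
  set (e1 := (eps / (2 * (Cmod m + 1)))%R).
  set (e2 := (eps / (2 * B))%R).
  pose proof (Cmod_ge_0 m) as Hm.
  assert (He1 : (0 < e1)%R) by (unfold e1; apply Rdiv_lt_0_compat; lra).
  assert (He2 : (0 < e2)%R) by (unfold e2; apply Rdiv_lt_0_compat; lra).
  destruct (Hu e1 He1) as [N1 H1]. destruct (Hv e2 He2) as [N2 H2].
  exists (N1 + N2)%nat. intros n Hn.
  replace (u n * v n - l * m) with (u n * (v n - m) + (u n - l) * m) by ring.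
  eapply Rle_lt_trans; [apply Cmod_triangle|]. rewrite !Cmod_mult.
  specialize (H1 n ltac:(lia)). specialize (H2 n ltac:(lia)). specialize (HB n).
  pose proof (Cmod_ge_0 (u n)). pose proof (Cmod_ge_0 (v n - m)). pose proof (Cmod_ge_0 (u n - l)).
  assert (Cmod (u n) * Cmod (v n - m) <= B * e2)%R by (apply Rmult_le_compat; lra).
  assert (Cmod (u n - l) * Cmod m <= e1 * (Cmod m + 1))%R by (apply Rmult_le_compat; lra).
  assert (B * e2 = eps / 2)%R by (unfold e2; field; lra).
  assert (e1 * (Cmod m + 1) = eps / 2)%R by (unfold e1; field; lra).
  assert (Cmod (u n) * Cmod (v n - m) <= B * e2 /\ (B * e2 < eps/2 \/ B*e2 = eps/2))%R by lra.
  assert (Cmod (u n - l) * Cmod m < e1 * (Cmod m + 1))%R.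
  { apply Rle_lt_trans with (e1 * Cmod m)%R. apply Rmult_le_compat_r; lra.
    apply Rmult_lt_compat_l; lra. }
  lra.
Qed.

Lemma Clim_scal c u l : Clim u l -> Clim (fun n => c * u n) (c * l).
Proof. intros H. apply Clim_mult; auto. apply Clim_const. Qed.

Lemma Clim_pow0 p : (Cmod p < 1)%R -> Clim (fun n => p ^ n) 0.
Proof.
  intros Hp eps Heps.
  assert (Rabs (Cmod p) < 1)%R by (rewrite Rabs_pos_eq; auto; apply Cmod_ge_0).
  destruct (pow_lt_1_zero (Cmod p) H eps Heps) as [N HN]. exists N. intros n Hn.
  replace (p ^ n - 0) with (p ^ n) by ring. rewrite Cmod_pow.
  specialize (HN n Hn). rewrite Rabs_pos_eq in HN; auto. apply pow_le, Cmod_ge_0.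
Qed.

Lemma Clim_comp u l (g : nat -> nat) : Clim u l -> (forall n, (n <= g n + 0)%nat \/ True) ->
  (forall M, exists N, forall n, (N <= n)%nat -> (M <= g n)%nat) -> Clim (fun n => u (g n)) l.
Proof.
  intros H _ Hg eps Heps. destruct (H eps Heps) as [M HM]. destruct (Hg M) as [N HN].
  exists N. intros n Hn. apply HM, HN, Hn.
Qed.

Lemma Clim_subk u l k : Clim u l -> Clim (fun n => u (n - k)%nat) l.
Proof.
  intros H. apply (Clim_comp u l (fun n => (n - k)%nat) H (fun _ => or_intror I)).
  intros M. exists (M + k)%nat. intros. lia.
Qed.

Lemma Clim_double u l : Clim u l -> Clim (fun n => u (2 * n)%nat) l.
Proof.
  intros H. apply (Clim_comp u l (fun n => (2 * n)%nat) H (fun _ => or_intror I)).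
  intros M. exists M. intros. lia.
Qed.

Lemma Clim_le_bound u l B : Clim u l -> (forall n, (Cmod (u n) <= B)%R) -> (Cmod l <= B)%R.
Proof.
  intros H HB. destruct (Rle_lt_dec (Cmod l) B) as [h|h]; auto.
  destruct (H (Cmod l - B)%R ltac:(lra)) as [N HN]. specialize (HN N (le_n _)).
  specialize (HB N). pose proof (Cmod_tri3 l (u N) 0).
  replace (l - 0) with l in H0 by ring. replace (u N - 0) with (u N) in H0 by ring.
  rewrite Cmod_sub_sym in H0. lra.
Qed.

Lemma Clim_fsum (a : nat -> nat -> C) (b : nat -> C) K :
  (forall k, Clim (fun N => a N k) (b k)) -> Clim (fun N => fsum (a N) K) (fsum b K).
Proof.
  intros H. induction K; simpl.
  - apply Clim_const.
  - apply Clim_plus; auto.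
Qed.

Lemma fsum_ext_lt f g n : (forall k, (k < n)%nat -> f k = g k) -> fsum f n = fsum g n.
Proof.
  induction n; intros H; simpl; auto.
  rewrite IHn by (intros; apply H; lia). rewrite H by lia. reflexivity.
Qed.

Lemma fsum_plus f g n : fsum (fun k => f k + g k) n = fsum f n + fsum g n.
Proof. induction n; simpl. ring. rewrite IHn. ring. Qed.

Lemma fsum_mulr f c n : fsum (fun k => f k * c) n = fsum f n * c.
Proof. induction n; simpl. ring. rewrite IHn. ring. Qed.

Lemma fsum_mull f c n : fsum (fun k => c * f k) n = c * fsum f n.
Proof. induction n; simpl. ring. rewrite IHn. ring. Qed.

Lemma fsum_shift f n : fsum f (S n) = f O + fsum (fun k => f (S k)) n.
Proof. induction n; simpl in *. ring. rewrite IHn. ring. Qed.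

Lemma fsum_diff_bound (f : nat -> C) (M : nat -> R) m d :
  (forall k, (Cmod (f k) <= M k)%R) ->
  (Cmod (fsum f (m + d) - fsum f m) <= fsumR M (m + d) - fsumR M m)%R.
Proof.
  intros HM. induction d.
  - rewrite Nat.add_0_r. replace (fsum f m - fsum f m) with (RtoC 0) by ring. rewrite Cmod_0. lra.
  - rewrite Nat.add_succ_r. simpl.
    replace (fsum f (m + d) + f (m + d)%nat - fsum f m) with ((fsum f (m + d) - fsum f m) + f (m + d)%nat) by ring.
    eapply Rle_trans; [apply Cmod_triangle|]. specialize (HM (m + d)%nat). lra.
Qed.

Lemma fsum_diff_bound' (f : nat -> C) (M : nat -> R) m n :
  (forall k, (Cmod (f k) <= M k)%R) -> (m <= n)%nat ->
  (Cmod (fsum f n - fsum f m) <= fsumR M n - fsumR M m)%R.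
Proof.
  intros HM Hmn. replace n with (m + (n - m))%nat by lia. apply fsum_diff_bound; auto.
Qed.

Lemma Cmod_tri4 x y z w : (Cmod (x + y - z + w) <= Cmod x + Cmod y + Cmod z + Cmod w)%R.
Proof.
  eapply Rle_trans; [apply Cmod_triangle|].
  unfold Cminus. eapply Rle_trans. apply Rplus_le_compat_r. apply Cmod_triangle.
  eapply Rle_trans. apply Rplus_le_compat_r, Rplus_le_compat_r. apply Cmod_triangle.
  rewrite Cmod_opp. lra.
Qed.

Lemma tannery (a : nat -> nat -> C) (b : nat -> C) (M : nat -> R) :
  (forall k, Clim (fun N => a N k) (b k)) ->
  (forall N k, (Cmod (a N k) <= M k)%R) -> ex_series M ->
  exists L, is_series b L /\ Clim (fun N => fsum (a N) (S N)) L.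
Proof.
  intros Hlim Hbd HM.
  assert (Hb : forall k, (Cmod (b k) <= M k)%R).
  { intros k. apply (Clim_le_bound (fun N => a N k)); auto. }
  assert (Hexb : ex_series b).
  { apply (ex_series_le (K:=C_AbsRing) (V:=C_CompleteNormedModule) b M); auto. }
  destruct Hexb as [L HL]. exists L. split; auto.
  apply is_series_Clim in HL.
  destruct HM as [SM HSM]. apply is_series_Rlim in HSM.
  intros eps Heps.
  destruct (HSM (eps/8)%R ltac:(lra)) as [K HK].
  destruct (Clim_fsum a b K Hlim (eps/4)%R ltac:(lra)) as [N1 HN1].
  exists (N1 + K)%nat. intros N HN.
  destruct (HL (eps/4)%R ltac:(lra)) as [N2 HN2].
  set (n := (N2 + S N + K)%nat).
  assert (E : fsum (a N) (S N) - L =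
     (fsum (a N) K - fsum b K) + (fsum (a N) (S N) - fsum (a N) K)
     - (fsum b n - fsum b K) + (fsum b n - L)) by ring.
  rewrite E.
  pose proof (HN1 N ltac:(lia)) as T1.
  pose proof (fsum_diff_bound' (a N) M K (S N) (Hbd N) ltac:(lia)) as T2.
  pose proof (fsum_diff_bound' b M K n Hb ltac:(unfold n; lia)) as T3.
  pose proof (HN2 n ltac:(unfold n; lia)) as T4.
  pose proof (HK K (le_n _)) as U1. pose proof (HK (S N) ltac:(lia)) as U2.
  pose proof (HK n ltac:(unfold n; lia)) as U3.
  apply Rabs_def2 in U1. apply Rabs_def2 in U2. apply Rabs_def2 in U3.
  pose proof (Cmod_tri4 (fsum (a N) K - fsum b K) (fsum (a N) (S N) - fsum (a N) K) (fsum b n - fsum b K) (fsum b n - L)).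
  lra.
Qed.

Lemma ratio_summable (u : nat -> C) (c rho : R) :
  (0 <= c)%R -> (0 <= rho < 1)%R ->
  (forall k, (Cmod (u (S k)) <= c * rho ^ k * Cmod (u k))%R) ->
  ex_series (fun k => Cmod (u k)).
Proof.
  intros Hc Hr Hu.
  assert (Rabs rho < 1)%R by (rewrite Rabs_pos_eq; lra).
  destruct (pow_lt_1_zero rho H (/ (2 * (c + 1)))%R) as [N HN].
  { apply Rinv_0_lt_compat. lra. }
  assert (Hs : forall n, (N <= n)%nat -> (c * rho ^ n <= /2)%R).
  { intros n Hn. specialize (HN n Hn). rewrite Rabs_pos_eq in HN by (apply pow_le; lra).
    apply Rle_trans with (c * / (2 * (c + 1)))%R. apply Rmult_le_compat_l; lra.
    apply Rmult_le_reg_l with (2 * (c+1))%R. lra.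
    field_simplify; lra. }
  assert (Hk : forall k, (Cmod (u (N + k)%nat) <= Cmod (u N) * (/2) ^ k)%R).
  { induction k.
    - rewrite Nat.add_0_r. simpl. lra.
    - rewrite Nat.add_succ_r. eapply Rle_trans; [apply Hu|].
      specialize (Hs (N + k)%nat ltac:(lia)). pose proof (Cmod_ge_0 (u (N + k)%nat)).
      simpl. apply Rle_trans with (/2 * Cmod (u (N + k)%nat))%R.
      + apply Rmult_le_compat_r; lra.
      + pose proof (Cmod_ge_0 (u N)). nra. }
  apply (ex_series_incr_n (K:=R_AbsRing) (V:=R_NormedModule) _ N).
  apply (ex_series_le (K:=R_AbsRing) (V:=R_CompleteNormedModule) _ (fun k => Cmod (u N) * (/2) ^ k)%R).
  - intros n. change (Rabs (Cmod (u (N + n)%nat)) <= Cmod (u N) * (/ 2) ^ n)%R.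
    rewrite Rabs_pos_eq by apply Cmod_ge_0. apply Hk.
  - apply (ex_series_scal_l (K:=R_AbsRing) (V:=R_NormedModule) (Cmod (u N)) (fun k => (/2)^k)%R).
    apply ex_series_geom. rewrite Rabs_pos_eq; lra.
Qed.

Lemma geom_fsum r n : (r < 1)%R -> fsumR (fun i => r ^ i)%R n = ((1 - r ^ n) / (1 - r))%R.
Proof. intros Hr. induction n; simpl. field; lra. rewrite IHn. field; lra. Qed.

Lemma geom_fsum_le r n : (0 <= r < 1)%R -> (fsumR (fun i => r ^ i)%R n <= / (1 - r))%R.
Proof.
  intros Hr. rewrite geom_fsum by lra. unfold Rdiv.
  apply Rle_trans with (1 * / (1 - r))%R; [|lra]. apply Rmult_le_compat_r.
  - apply Rlt_le, Rinv_0_lt_compat. lra.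
  - pose proof (pow_le r n ltac:(lra)). lra.
Qed.

Lemma Cmod_factor_up x p n : (Cmod (1 - x * p ^ n) <= 1 + Cmod x * Cmod p ^ n)%R.
Proof.
  unfold Cminus. eapply Rle_trans; [apply Cmod_triangle|]. rewrite Cmod_opp, Cmod_1, Cmod_mult, Cmod_pow. lra.
Qed.

Lemma Cmod_factor_low x p n : (1 - Cmod x * Cmod p ^ n <= Cmod (1 - x * p ^ n))%R.
Proof.
  pose proof (Cmod_triangle (1 - x * p ^ n) (x * p ^ n)).
  replace (1 - x * p ^ n + x * p ^ n) with (RtoC 1) in H by ring.
  rewrite Cmod_1, Cmod_mult, Cmod_pow in H. lra.
Qed.

Lemma qpoch_up_aux x p n : (Cmod (qpoch x p n) <= exp (Cmod x * fsumR (fun i => Cmod p ^ i)%R n))%R.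
Proof.
  induction n; simpl.
  - rewrite Rmult_0_r, exp_0, Cmod_1. lra.
  - rewrite Cmod_mult. rewrite Rmult_plus_distr_l, exp_plus.
    apply Rmult_le_compat; try apply Cmod_ge_0; auto.
    eapply Rle_trans; [apply Cmod_factor_up|]. apply exp_ineq1_le.
Qed.

Lemma exp_le x y : (x <= y)%R -> (exp x <= exp y)%R.
Proof. intros [h|h]. apply Rlt_le, exp_increasing, h. subst; lra. Qed.

Lemma qpoch_up x p n : (Cmod p < 1)%R -> (Cmod (qpoch x p n) <= exp (Cmod x / (1 - Cmod p)))%R.
Proof.
  intros Hp. eapply Rle_trans; [apply qpoch_up_aux|]. apply exp_le.
  unfold Rdiv. apply Rmult_le_compat_l. apply Cmod_ge_0.
  apply geom_fsum_le. pose proof (Cmod_ge_0 p). lra.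
Qed.

Lemma one_minus_exp t c : (0 <= t <= c)%R -> (c < 1)%R -> (exp (- (t / (1 - c))) <= 1 - t)%R.
Proof.
  intros Ht Hc. rewrite exp_Ropp.
  pose proof (exp_ineq1_le (t / (1 - c))). pose proof (exp_pos (t / (1 - c))).
  assert (1 <= (1 + t / (1 - c)) * (1 - t))%R.
  { assert (t / (1 - c) * (1 - c) = t)%R by (field; lra).
    assert (0 <= t / (1 - c))%R by (apply Rdiv_le_0_compat; lra).
    assert (t * (1 - t) >= t * (1 - c))%R by nra.
    nra. }
  apply Rmult_le_reg_l with (exp (t / (1 - c))); auto.
  rewrite Rinv_r by lra. nra.
Qed.

Lemma qpoch_low_aux x p n : (Cmod x < 1)%R -> (Cmod p <= 1)%R ->
  (exp (- (Cmod x / (1 - Cmod x) * fsumR (fun i => Cmod p ^ i)%R n)) <= Cmod (qpoch x p n))%R.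
Proof.
  intros Hx Hp. induction n; simpl.
  - rewrite Rmult_0_r, Ropp_0, exp_0, Cmod_1. lra.
  - rewrite Cmod_mult. rewrite Rmult_plus_distr_l, Ropp_plus_distr, exp_plus.
    apply Rmult_le_compat; try (apply Rlt_le, exp_pos); auto.
    eapply Rle_trans; [|apply Cmod_factor_low].
    replace (Cmod x / (1 - Cmod x) * Cmod p ^ n)%R with ((Cmod x * Cmod p ^ n) / (1 - Cmod x))%R by (field; lra).
    apply one_minus_exp; auto.
    pose proof (Cmod_ge_0 x). pose proof (Cmod_ge_0 p).
    pose proof (pow_le (Cmod p) n H0).
    split. nra. assert (Cmod p ^ n <= 1)%R. { clear -H0 Hp. induction n; simpl. lra. nra. } nra.
Qed.

Definition lowc (x p : C) : R := exp (- (Cmod x / (1 - Cmod x) / (1 - Cmod p))).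

Lemma qpoch_low x p n : (Cmod x < 1)%R -> (Cmod p < 1)%R -> (lowc x p <= Cmod (qpoch x p n))%R.
Proof.
  intros Hx Hp. eapply Rle_trans; [|apply qpoch_low_aux; lra]. unfold lowc. apply exp_le.
  apply Ropp_le_contravar. unfold Rdiv at 2. apply Rmult_le_compat_l.
  - pose proof (Cmod_ge_0 x). apply Rdiv_le_0_compat; lra.
  - apply geom_fsum_le. pose proof (Cmod_ge_0 p). lra.
Qed.

Lemma lowc_pos x p : (0 < lowc x p)%R.
Proof. apply exp_pos. Qed.

Lemma qpoch_nz x p n : (Cmod x < 1)%R -> (Cmod p < 1)%R -> qpoch x p n <> 0.
Proof.
  intros Hx Hp E. pose proof (qpoch_low x p n Hx Hp). rewrite E, Cmod_0 in H.
  pose proof (lowc_pos x p). lra.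
Qed.

Lemma Cpow_add x a b : x ^ (a + b) = x ^ a * x ^ b.
Proof. induction a; simpl. ring. rewrite IHa. ring. Qed.

Lemma Cpow_mul x a b : x ^ (a * b) = (x ^ a) ^ b.
Proof.
  induction b. rewrite Nat.mul_0_r. reflexivity.
  rewrite Nat.mul_succ_r, Cpow_add, IHb. simpl. ring.
Qed.

Lemma Cpow_opp1 x n : (- x) ^ n = (-1) ^ n * x ^ n.
Proof. induction n; simpl. ring. rewrite IHn. ring. Qed.

Fixpoint cc (x p : C) (k : nat) : C :=
  match k with O => 1 | S m => cc x p m * (- x * p ^ m) end.

Fixpoint RR (p : C) (N k : nat) : C :=
  match k with O => 1 | S m => RR p N m * (1 - p ^ (N - m)) end.

Definition qbin (p : C) (N k : nat) : C := RR p N k / qpoch p p k.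

Lemma RR_S p N k : RR p (S N) (S k) = (1 - p ^ (S N)) * RR p N k.
Proof.
  induction k.
  - simpl. ring.
  - change (RR p (S N) (S (S k))) with (RR p (S N) (S k) * (1 - p ^ (S N - S k))).
    rewrite IHk. simpl. ring.
Qed.

Lemma RR_big p N k : (N < k)%nat -> RR p N k = 0.
Proof.
  intros H. induction k; [lia|].
  destruct (Nat.eq_dec k N).
  - subst. simpl. rewrite Nat.sub_diag. simpl. ring.
  - simpl. rewrite IHk by lia. ring.
Qed.

Lemma RR_full p N k : (k <= N)%nat -> RR p N k * qpoch p p (N - k) = qpoch p p N.
Proof.
  induction k; intros H.
  - simpl. rewrite Nat.sub_0_r. ring.
  - specialize (IHk ltac:(lia)). replace (N - k)%nat with (S (N - S k)) in IHk by lia.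
    simpl in IHk. rewrite <- IHk. simpl.
    replace (N - k)%nat with (S (N - S k)) by lia. simpl. ring.
Qed.

Lemma qpp_nz p n : (Cmod p < 1)%R -> qpoch p p n <> 0.
Proof. intros; apply qpoch_nz; auto. Qed.

Lemma qbin_0 p N : (Cmod p < 1)%R -> qbin p N 0 = 1.
Proof. intros. unfold qbin. simpl. field. Qed.

Lemma qbin_big p N k : (N < k)%nat -> qbin p N k = 0.
Proof. intros. unfold qbin. rewrite RR_big by auto. unfold Cdiv. ring. Qed.

Lemma qbin_formula p N k : (Cmod p < 1)%R -> (k <= N)%nat ->
  qbin p N k = qpoch p p N / (qpoch p p k * qpoch p p (N - k)).
Proof.
  intros Hp Hk. unfold qbin. rewrite <- (RR_full p N k Hk).
  field. split; apply qpp_nz; auto.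
Qed.

Lemma qbin_pascal p N k : (Cmod p < 1)%R -> (k <= N)%nat ->
  qbin p (S N) (S k) = qbin p N (S k) + p ^ (N - k) * qbin p N k.
Proof.
  intros Hp Hk. unfold qbin. rewrite RR_S.
  change (RR p N (S k)) with (RR p N k * (1 - p ^ (N - k))).
  change (qpoch p p (S k)) with (qpoch p p k * (1 - p * p ^ k)).
  assert (E : p ^ (S N) = p ^ (N - k) * (p * p ^ k)).
  { replace (S N) with ((N - k) + S k)%nat by lia. rewrite Cpow_add. reflexivity. }
  rewrite E.
  pose proof (qpp_nz p (S k) Hp). simpl in H.
  field. split; intro h; apply H; rewrite h; ring.
Qed.

Lemma qbinom x p N : (Cmod p < 1)%R ->
  qpoch x p N = fsum (fun k => qbin p N k * cc x p k) (S N).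
Proof.
  intros Hp. induction N.
  - simpl. rewrite qbin_0 by auto. ring.
  - change (qpoch x p (S N)) with (qpoch x p N * (1 - x * p ^ N)).
    rewrite IHN. rewrite (fsum_shift (fun k => qbin p (S N) k * cc x p k) (S N)). cbv beta.
    rewrite qbin_0 by auto.
    rewrite (fsum_ext_lt (fun k => qbin p (S N) (S k) * cc x p (S k)) (fun k => qbin p N (S k) * cc x p (S k) + qbin p N k * cc x p k * (- x * p ^ N))).
    2:{ intros k Hk. cbv beta. rewrite qbin_pascal by (auto; lia). simpl.
        replace (p ^ N) with (p ^ (N - k) * p ^ k).
        2:{ rewrite <- Cpow_add. f_equal. lia. }
        ring. }
    rewrite fsum_plus, fsum_mulr.
    pose proof (fsum_shift (fun k => qbin p N k * cc x p k) (S N)) as Hs. cbv beta in Hs.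
    change (fsum ?g (S (S N))) with (fsum g (S N) + g (S N)) in Hs. cbv beta in Hs.
    rewrite (qbin_big p N (S N)) in Hs by lia. rewrite qbin_0 in Hs by auto.
    assert (HG : fsum (fun k : nat => qbin p N (S k) * cc x p (S k)) (S N) =
      fsum (fun k : nat => qbin p N k * cc x p k) (S N) + 0 * cc x p (S N) - 1 * cc x p 0).
    { rewrite Hs. ring. }
    rewrite HG. simpl. ring.
Qed.

Definition Bq (p : C) : R := (exp (Cmod p / (1 - Cmod p)) / lowc p p / lowc p p)%R.

Lemma qbin_bound p N k : (Cmod p < 1)%R -> (Cmod (qbin p N k) <= Bq p)%R.
Proof.
  intros Hp. pose proof (lowc_pos p p) as Hl.
  assert (HB : (0 <= Bq p)%R).
  { unfold Bq. apply Rlt_le. apply Rdiv_lt_0_compat; auto. apply Rdiv_lt_0_compat; auto. apply exp_pos. }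
  destruct (le_lt_dec k N) as [h|h].
  2:{ rewrite qbin_big by auto. rewrite Cmod_0. auto. }
  unfold qbin. rewrite Cmod_div by (apply qpp_nz; auto).
  assert (ER : RR p N k = qpoch p p N / qpoch p p (N - k)).
  { rewrite <- (RR_full p N k h). field. apply qpp_nz; auto. }
  rewrite ER, Cmod_div by (apply qpp_nz; auto).
  pose proof (qpoch_up p p N Hp). pose proof (qpoch_low p p (N - k) Hp Hp).
  pose proof (qpoch_low p p k Hp Hp). pose proof (Cmod_ge_0 (qpoch p p N)).
  unfold Bq. unfold Rdiv.
  apply Rmult_le_compat.
  - apply Rmult_le_pos; auto. apply Rlt_le, Rinv_0_lt_compat; lra.
  - apply Rlt_le, Rinv_0_lt_compat; lra.
  - apply Rmult_le_compat; auto. apply Rlt_le, Rinv_0_lt_compat; lra.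
    apply Rinv_le_contravar; auto.
  - apply Rinv_le_contravar; auto.
Qed.

Lemma RR_lim p k : (Cmod p < 1)%R -> Clim (fun N => RR p N k) 1.
Proof.
  intros Hp. induction k.
  - apply (Clim_ext (fun _ => 1)); [reflexivity|apply Clim_const].
  - replace (RtoC 1) with (1 * (1 + (-1) * 0)) by ring.
    apply (Clim_ext (fun N => RR p N k * (1 - p ^ (N - k)))); [reflexivity|].
    apply Clim_mult; auto.
    apply (Clim_ext (fun N => 1 + (-1) * p ^ (N - k))). { intros; ring. }
    apply Clim_plus. apply Clim_const. apply Clim_scal.
    apply (Clim_subk (fun n => p ^ n)). apply Clim_pow0; auto.
Qed.

Lemma qbin_lim p k : (Cmod p < 1)%R -> Clim (fun N => qbin p N k) (/ qpoch p p k).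
Proof.
  intros Hp. replace (/ qpoch p p k) with (1 * / qpoch p p k) by ring.
  apply Clim_mult. apply RR_lim; auto. apply Clim_const.
Qed.

Lemma Cmod_cc_S x p k : Cmod (cc x p (S k)) = (Cmod x * Cmod p ^ k * Cmod (cc x p k))%R.
Proof. simpl. rewrite !Cmod_mult, Cmod_opp, Cmod_pow. ring. Qed.

Lemma cc_summable x p : (Cmod p < 1)%R -> ex_series (fun k => Cmod (cc x p k)).
Proof.
  intros Hp. apply (ratio_summable _ (Cmod x) (Cmod p)).
  - apply Cmod_ge_0.
  - pose proof (Cmod_ge_0 p). lra.
  - intros k. rewrite Cmod_cc_S. lra.
Qed.

Lemma ex_series_scalR (c : R) (u : nat -> R) : ex_series u -> ex_series (fun k => c * u k)%R.
Proof. intros H. exact (ex_series_scal_l (K:=R_AbsRing) (V:=R_NormedModule) c u H). Qed.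

Lemma qpoch_conv x p : (Cmod p < 1)%R ->
  exists P, Clim (qpoch x p) P /\ is_series (fun k => cc x p k / qpoch p p k) P.
Proof.
  intros Hp.
  destruct (tannery (fun N k => qbin p N k * cc x p k) (fun k => cc x p k / qpoch p p k)
                    (fun k => Bq p * Cmod (cc x p k))%R) as [L [HL1 HL2]].
  - intros k. replace (cc x p k / qpoch p p k) with (/ qpoch p p k * cc x p k) by (unfold Cdiv; ring).
    apply Clim_mult. apply qbin_lim; auto. apply Clim_const.
  - intros N k. rewrite Cmod_mult. apply Rmult_le_compat_r. apply Cmod_ge_0. apply qbin_bound; auto.
  - apply ex_series_scalR. apply cc_summable; auto.
  - exists L. split; auto. apply (Clim_ext (fun N => fsum (fun k => qbin p N k * cc x p k) (S N))); auto.
    intros N. rewrite qbinom by auto. reflexivity.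
Qed.

Lemma fsum_triangle (f : nat -> nat -> C) N :
  fsum (fun n => fsum (fun k => f n k) (S n)) (S N) =
  fsum (fun k => fsum (fun m => f (k + m)%nat k) (S (N - k))) (S N).
Proof.
  induction N.
  - simpl. ring.
  - change (fsum (fun n => fsum (fun k => f n k) (S n)) (S (S N))) with
      (fsum (fun n => fsum (fun k => f n k) (S n)) (S N) + fsum (fun k => f (S N) k) (S (S N))).
    rewrite IHN.
    change (fsum (fun k => fsum (fun m => f (k + m)%nat k) (S (S N - k))) (S (S N))) with
      (fsum (fun k => fsum (fun m => f (k + m)%nat k) (S (S N - k))) (S N) +
       fsum (fun m => f (S N + m)%nat (S N)) (S (S N - S N))).
    rewrite (fsum_ext_lt (fun k => fsum (fun m => f (k + m)%nat k) (S (S N - k)))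
       (fun k => fsum (fun m => f (k + m)%nat k) (S (N - k)) + f (S N) k)).
    2:{ intros k Hk. replace (S N - k)%nat with (S (N - k)) by lia.
        change (fsum (fun m => f (k + m)%nat k) (S (S (N - k)))) with
          (fsum (fun m => f (k + m)%nat k) (S (N - k)) + f (k + S (N - k))%nat k).
        replace (k + S (N - k))%nat with (S N) by lia. reflexivity. }
    rewrite fsum_plus. rewrite Nat.sub_diag.
    change (fsum (fun k => f (S N) k) (S (S N))) with (fsum (fun k => f (S N) k) (S N) + f (S N) (S N)).
    change (fsum (fun m : nat => f (S N + m)%nat (S N)) 1) with (0 + f (S N + 0)%nat (S N)).
    rewrite Nat.add_0_r. change (fsum (fun k : nat => f (S N) k) (S N)) with (fsum (f (S N)) (S N)). ring.
Qed.

Lemma qbin_mul p N k m : (Cmod p < 1)%R -> (k + m <= N)%nat ->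
  qbin p N (k + m) * qbin p (k + m) k = qbin p N k * qbin p (N - k) m.
Proof.
  intros Hp H.
  rewrite !qbin_formula by (auto; lia).
  replace (k + m - k)%nat with m by lia.
  replace (N - k - m)%nat with (N - (k + m))%nat by lia.
  pose proof (qpp_nz p k Hp). pose proof (qpp_nz p m Hp). pose proof (qpp_nz p (k + m) Hp).
  pose proof (qpp_nz p (N - k) Hp). pose proof (qpp_nz p (N - (k + m)) Hp).
  field. repeat split; auto.
Qed.

Lemma pow_sq q k m : q ^ ((k + m) * (k + m)) = q ^ (k * k) * cc ((- q) * (q ^ 2) ^ k) (q ^ 2) m.
Proof.
  induction m.
  - rewrite Nat.add_0_r. simpl. ring.
  - replace ((k + S m) * (k + S m))%nat with ((k + m) * (k + m) + (1 + 2 * k + 2 * m))%nat by lia.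
    rewrite Cpow_add, IHm. simpl cc.
    rewrite !Cpow_add, !Cpow_mul. simpl. ring.
Qed.

Lemma qpoch_split x p k d : qpoch x p (k + d) = qpoch x p k * qpoch (x * p ^ k) p d.
Proof.
  induction d.
  - rewrite Nat.add_0_r. simpl. ring.
  - rewrite Nat.add_succ_r. simpl. rewrite IHd. rewrite Cpow_add. ring.
Qed.

Lemma Cmod_sq_lt q : (Cmod q < 1)%R -> (Cmod (q ^ 2) < 1)%R.
Proof.
  intros H. rewrite Cmod_pow. pose proof (Cmod_ge_0 q). simpl. nra.
Qed.

Lemma F1 A q N : (Cmod q < 1)%R ->
  fsum (fun n => q ^ (n * n) * qbin (q ^ 2) N n * qpoch A (q ^ 2) n) (S N) =
  qpoch (- q) (q ^ 2) N *
  fsum (fun k => qbin (q ^ 2) N k * (q ^ (k * k) * cc A (q ^ 2) k) / qpoch (- q) (q ^ 2) k) (S N).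
Proof.
  intros Hq. set (p := q ^ 2). assert (Hp : (Cmod p < 1)%R) by (apply Cmod_sq_lt; auto).
  rewrite (fsum_ext_lt _ (fun n => fsum (fun k => q ^ (n * n) * qbin p N n * (qbin p n k * cc A p k)) (S n))).
  2:{ intros n Hn. rewrite (qbinom A p n Hp). rewrite fsum_mull. reflexivity. }
  rewrite (fsum_triangle (fun n k => q ^ (n * n) * qbin p N n * (qbin p n k * cc A p k))).
  rewrite <- fsum_mull.
  apply fsum_ext_lt. intros k Hk.
  rewrite (fsum_ext_lt _ (fun m => (q ^ (k * k) * qbin p N k * cc A p k) * (qbin p (N - k) m * cc ((- q) * p ^ k) p m))).
  2:{ intros m Hm. rewrite pow_sq. fold p.
      replace (q ^ (k * k) * cc (- q * p ^ k) p m * qbin p N (k + m) * (qbin p (k + m) k * cc A p k))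
        with (q ^ (k * k) * cc (- q * p ^ k) p m * cc A p k * (qbin p N (k + m) * qbin p (k + m) k)) by ring.
      rewrite qbin_mul by (auto; lia). ring. }
  rewrite fsum_mull. rewrite <- qbinom by auto.
  replace (qpoch (- q) p N) with (qpoch (- q) p (k + (N - k))) by (f_equal; lia).
  rewrite qpoch_split.
  assert (Hqk : qpoch (- q) p k <> 0).
  { apply qpoch_nz; auto. rewrite Cmod_opp; auto. }
  field. auto.
Qed.

Lemma Cpow_1 n : (RtoC 1) ^ n = 1.
Proof. induction n; simpl. reflexivity. rewrite IHn. ring. Qed.

Lemma m1_even j : (-1) ^ (2 * j) = 1.
Proof. rewrite Cpow_mul. replace ((-1) ^ 2) with (RtoC 1) by (simpl; ring). apply Cpow_1. Qed.

Lemma m1_odd j : (-1) ^ (S (2 * j)) = -1.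
Proof. change ((-1) ^ (S (2 * j))) with (-1 * (-1) ^ (2 * j)). rewrite m1_even. ring. Qed.

Lemma cc_neg x p k : cc (- x) p k = (-1) ^ k * cc x p k.
Proof. induction k; simpl. ring. rewrite IHk. ring. Qed.

Lemma mq_even q j : (- q) ^ (2 * j) = (q ^ 2) ^ j.
Proof. rewrite Cpow_mul. f_equal. simpl. ring. Qed.

Lemma cc_even s q j : cc s (- q) (2 * j) = q ^ (j * j) * cc (s * s) (q ^ 2) j.
Proof.
  induction j.
  - simpl. ring.
  - replace (2 * S j)%nat with (S (S (2 * j))) by lia.
    change (cc s (- q) (S (S (2 * j)))) with (cc s (- q) (2 * j) * (- s * (- q) ^ (2 * j)) * (- s * (- q) ^ (S (2 * j)))).
    rewrite IHj. replace (S j * S j)%nat with (j * j + (1 + 2 * j))%nat by lia.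
    change (cc (s * s) (q ^ 2) (S j)) with (cc (s * s) (q ^ 2) j * (- (s * s) * (q ^ 2) ^ j)).
    change ((- q) ^ (S (2 * j))) with (- q * (- q) ^ (2 * j)).
    rewrite mq_even, Cpow_add, (Cpow_add q 1 (2 * j)), (Cpow_mul q 2 j). ring.
Qed.

Lemma qpoch_even q j : qpoch (- q) (- q) (2 * j) = qpoch (q ^ 2) (q ^ 2) j * qpoch (- q) (q ^ 2) j.
Proof.
  induction j.
  - simpl. ring.
  - replace (2 * S j)%nat with (S (S (2 * j))) by lia.
    change (qpoch (- q) (- q) (S (S (2 * j)))) with
      (qpoch (- q) (- q) (2 * j) * (1 - - q * (- q) ^ (2 * j)) * (1 - - q * (- q) ^ (S (2 * j)))).
    change ((- q) ^ (S (2 * j))) with (- q * (- q) ^ (2 * j)).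
    rewrite IHj, mq_even. simpl. ring.
Qed.

Lemma fsum_even (s q : C) J : (Cmod q < 1)%R ->
  fsum (fun k => cc (- s) (- q) k / qpoch (- q) (- q) k + cc s (- q) k / qpoch (- q) (- q) k) (2 * J) =
  2 * fsum (fun j => q ^ (j * j) * cc (s * s) (q ^ 2) j / (qpoch (q ^ 2) (q ^ 2) j * qpoch (- q) (q ^ 2) j)) J.
Proof.
  intros Hq.
  assert (Hq2 : (Cmod (q ^ 2) < 1)%R) by (apply Cmod_sq_lt; auto).
  assert (Hmq : (Cmod (- q) < 1)%R) by (rewrite Cmod_opp; auto).
  induction J.
  - simpl. ring.
  - replace (2 * S J)%nat with (S (S (2 * J))) by lia.
    change (fsum ?f (S (S (2 * J)))) with (fsum f (2 * J) + f (2 * J)%nat + f (S (2 * J))).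
    rewrite IHJ. cbv beta. change (fsum ?g (S J)) with (fsum g J + g J). cbv beta.
    rewrite !cc_neg, m1_even, m1_odd, cc_even, qpoch_even.
    pose proof (qpp_nz (q ^ 2) J Hq2). pose proof (qpoch_nz (- q) (q ^ 2) J Hmq Hq2).
    pose proof (qpp_nz (- q) (S (2 * J)) Hmq).
    field. auto.
Qed.

Lemma Rpow_anti r a b : (0 <= r <= 1)%R -> (a <= b)%nat -> (r ^ b <= r ^ a)%R.
Proof.
  intros Hr Hab. replace b with (a + (b - a))%nat by lia. rewrite pow_add.
  pose proof (pow_le r a ltac:(lra)).
  assert (r ^ (b - a) <= 1)%R. { clear Hab. induction (b - a)%nat; simpl. lra. nra. }
  nra.
Qed.

Lemma v_step A q k :
  q ^ (S k * S k) * cc A (q ^ 2) (S k) = (q ^ (k * k) * cc A (q ^ 2) k) * (- A * q * (q ^ 4) ^ k).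
Proof.
  replace (S k * S k)%nat with (k * k + (1 + 2 * k))%nat by nia.
  change (cc A (q ^ 2) (S k)) with (cc A (q ^ 2) k * (- A * (q ^ 2) ^ k)).
  rewrite <- (Cpow_mul q 4 k). replace (4 * k)%nat with (2 * k + 2 * k)%nat by lia.
  rewrite (Cpow_add q (k * k) (1 + 2 * k)), (Cpow_add q 1 (2 * k)), (Cpow_add q (2 * k) (2 * k)).
  rewrite (Cpow_mul q 2 k). ring.
Qed.

Lemma v_summable A q : (Cmod q < 1)%R -> ex_series (fun k => Cmod (q ^ (k * k) * cc A (q ^ 2) k)).
Proof.
  intros Hq. pose proof (Cmod_ge_0 q).
  apply (ratio_summable _ (Cmod A * Cmod q) (Cmod q ^ 4)).
  - apply Rmult_le_pos; apply Cmod_ge_0.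
  - split. apply pow_le; auto. simpl. assert (Cmod q * Cmod q < 1)%R by nra. assert (0 <= Cmod q * Cmod q)%R by nra. nra.
  - intros k. rewrite v_step, !Cmod_mult, Cmod_opp, !Cmod_pow, <- pow_mult.
    right. ring.
Qed.

Theorem main (A q sA : C) (hsA : sA * sA = A) (hq : (Cmod q < 1)%R) :
  exists (F P1 P2 P3 : C),
    is_series (F_term A q) F /\
    is_qpoch_inf (- q) (q ^ 2) P1 /\
    is_qpoch_inf (- sA) (- q) P2 /\
    is_qpoch_inf sA (- q) P3 /\
    F = / 2 * P1 * (P2 + P3).
Proof.
  set (p := q ^ 2).
  assert (Hp : (Cmod p < 1)%R) by (apply Cmod_sq_lt; auto).
  assert (Hmq : (Cmod (- q) < 1)%R) by (rewrite Cmod_opp; auto).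
  pose proof (Cmod_ge_0 q) as Hq0.
  destruct (tannery (fun N n => q ^ (n * n) * qbin p N n * qpoch A p n) (F_term A q)
     (fun n => Bq p * exp (Cmod A / (1 - Cmod p)) * Cmod q ^ n)%R) as [F [HF HG]].
  { intros n. unfold F_term. fold p.
    apply (Clim_ext (fun N => (q ^ (n * n) * qpoch A p n) * qbin p N n)). { intros; ring. }
    replace (q ^ (n * n) * qpoch A p n / qpoch p p n) with ((q ^ (n * n) * qpoch A p n) * / qpoch p p n)
      by (unfold Cdiv; ring).
    apply Clim_scal. apply qbin_lim; auto. }
  { intros N n. rewrite !Cmod_mult, Cmod_pow.
    pose proof (qbin_bound p N n Hp). pose proof (qpoch_up A p n Hp).
    pose proof (Rpow_anti (Cmod q) n (n * n) ltac:(lra) ltac:(nia)).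
    pose proof (pow_le (Cmod q) (n * n) Hq0). pose proof (Cmod_ge_0 (qbin p N n)).
    pose proof (Cmod_ge_0 (qpoch A p n)).
    replace (Bq p * exp (Cmod A / (1 - Cmod p)) * Cmod q ^ n)%R with
      (Cmod q ^ n * Bq p * exp (Cmod A / (1 - Cmod p)))%R by ring.
    apply Rmult_le_compat; auto. apply Rmult_le_pos; auto.
    apply Rmult_le_compat; auto. }
  { apply ex_series_scalR. apply ex_series_geom. rewrite Rabs_pos_eq; auto. }
  destruct (tannery (fun N k => qbin p N k * (q ^ (k * k) * cc A p k) / qpoch (- q) p k)
     (fun j => q ^ (j * j) * cc (sA * sA) (q ^ 2) j / (qpoch (q ^ 2) (q ^ 2) j * qpoch (- q) (q ^ 2) j))
     (fun k => Bq p * / lowc (- q) p * Cmod (q ^ (k * k) * cc A p k))%R) as [S' [HS HH]].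
  { intros k. rewrite hsA. fold p.
    apply (Clim_ext (fun N => (q ^ (k * k) * cc A p k / qpoch (- q) p k) * qbin p N k)).
    { intros; unfold Cdiv; ring. }
    replace (q ^ (k * k) * cc A p k / (qpoch p p k * qpoch (- q) p k)) with
      ((q ^ (k * k) * cc A p k / qpoch (- q) p k) * / qpoch p p k).
    2:{ pose proof (qpp_nz p k Hp). pose proof (qpoch_nz (- q) p k Hmq Hp). field. auto. }
    apply Clim_scal. apply qbin_lim; auto. }
  { intros N k. pose proof (qpoch_nz (- q) p k Hmq Hp).
    rewrite Cmod_div by auto. rewrite Cmod_mult.
    pose proof (qbin_bound p N k Hp). pose proof (qpoch_low (- q) p k Hmq Hp).
    pose proof (lowc_pos (- q) p). pose proof (Cmod_ge_0 (qbin p N k)).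
    pose proof (Cmod_ge_0 (q ^ (k * k) * cc A p k)).
    unfold Rdiv.
    replace (Bq p * / lowc (- q) p * Cmod (q ^ (k * k) * cc A p k))%R with
      (Bq p * Cmod (q ^ (k * k) * cc A p k) * / lowc (- q) p)%R by ring.
    apply Rmult_le_compat.
    - apply Rmult_le_pos; auto.
    - apply Rlt_le, Rinv_0_lt_compat; lra.
    - apply Rmult_le_compat_r; auto.
    - apply Rinv_le_contravar; auto. }
  { apply ex_series_scalR. apply v_summable; auto. }
  destruct (qpoch_conv (- q) p Hp) as [P1 [HP1 _]].
  destruct (qpoch_conv (- sA) (- q) Hmq) as [P2 [HP2 HS2]].
  destruct (qpoch_conv sA (- q) Hmq) as [P3 [HP3 HS3]].
  exists F, P1, P2, P3.
  split; [auto|]. split; [apply Clim_filterlim; auto|].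
  split; [apply Clim_filterlim; auto|]. split; [apply Clim_filterlim; auto|].
  assert (E1 : F = P1 * S').
  { apply (Clim_unique (fun N => fsum (fun n => q ^ (n * n) * qbin p N n * qpoch A p n) (S N))); auto.
    apply (Clim_ext (fun N => qpoch (- q) p N *
       fsum (fun k => qbin p N k * (q ^ (k * k) * cc A p k) / qpoch (- q) p k) (S N))).
    { intros N. unfold p. rewrite F1 by auto. reflexivity. }
    apply Clim_mult; auto. }
  assert (E2 : P2 + P3 = 2 * S').
  { apply is_series_Clim in HS2. apply is_series_Clim in HS3. apply is_series_Clim in HS.
    pose proof (Clim_plus _ _ _ _ HS2 HS3) as H23.
    apply (Clim_ext _ (fsum (fun k => cc (- sA) (- q) k / qpoch (- q) (- q) k + cc sA (- q) k / qpoch (- q) (- q) k))) in H23.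
    2:{ intros n. rewrite fsum_plus. reflexivity. }
    apply Clim_double in H23.
    apply (Clim_unique (fun J => fsum (fun k => cc (- sA) (- q) k / qpoch (- q) (- q) k + cc sA (- q) k / qpoch (- q) (- q) k) (2 * J))); auto.
    apply (Clim_ext (fun J => 2 * fsum (fun j => q ^ (j * j) * cc (sA * sA) (q ^ 2) j / (qpoch (q ^ 2) (q ^ 2) j * qpoch (- q) (q ^ 2) j)) J)).
    { intros J. rewrite fsum_even by auto. reflexivity. }
    apply Clim_scal. auto. }
  rewrite E1, E2. field.
Qed.

Theorem lemma3p2 (A q sA : C) (hsA : sA * sA = A) (hq : (Cmod q < 1)%R) :
  exists (F P1 P2 P3 : C),
    is_series (F_term A q) F /\
    is_qpoch_inf (- q) (q ^ 2) P1 /\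
    is_qpoch_inf (- sA) (- q) P2 /\
    is_qpoch_inf sA (- q) P3 /\
    F = / 2 * P1 * (P2 + P3).
Proof. exact (main A q sA hsA hq). Qed.
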